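(* Let $I$ be the set of all $231$-avoiding permutations (of all sizes $n\ge0$, including the empty permutation) all of whose cycles have length $1$ or $2$. Then \[ i(t,x)=\sum_{\pi\in I}t^{c_1(\pi)}x^{c_2(\pi)}=\dfrac{1-x}{1-t-2x}. \]
   Context: A permutation avoids $231$ if there are no indices $i<j<k$ with $\pi_k<\pi_i<\pi_j$. $c_k(\pi)$ denotes the number of $k$-cycles of $\pi$. *)

(* Defs.v *)
From mathcomp Require Import all_boot all_order all_algebra all_fingroup.
Set Implicit Arguments. Unset Strict Implicit. Unset Printing Implicit Defensive.
Import GRing.Theory Num.Theory.
Local Open Scope ring_scope.

Definition avoids231 n (p : 'S_n) : bool :=
  [forall i : 'I_n, forall j : 'I_n, forall k : 'I_n,
     ~~ [&& (i < j)%N, (j < k)%N, (p k < p i)%N & (p i < p j)%N]].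

Definition ncycles n (p : 'S_n) (k : nat) : nat :=
  #|[set C in porbits p | #|C| == k]|.

Definition cycles_le2 n (p : 'S_n) : bool :=
  [forall C in porbits p, (#|C| == 1)%N || (#|C| == 2)%N].

Definition in_I n (p : 'S_n) : bool := avoids231 p && cycles_le2 p.

(* Formal power series in t, x with integer coefficients: F a b = [t^a x^b] F *)
Definition fps := nat -> nat -> int.

Definition fps_mul (F G : fps) : fps := fun a b =>
  \sum_(i < a.+1) \sum_(j < b.+1) F i j * G (a - i)%N (b - j)%N.

(* coefficient of t^a x^b in i(t,x) = sum_{pi in I} t^{c1} x^{c2}.
   A permutation in I with c1 = a, c2 = b has size n = a + 2b, so the
   sum over all sizes n >= 0 reduces to n <= a + 2b. *)
Definition i_gf : fps := fun a b =>
  (\sum_(n < (a + 2 * b).+1)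
     #|[set p : 'S_n | in_I p && (ncycles p 1 == a) && (ncycles p 2 == b)]|)%:Z.

Definition den_poly : fps := fun a b =>
  if (a == 0)%N && (b == 0)%N then 1
  else if (a == 1)%N && (b == 0)%N then -1
  else if (a == 0)%N && (b == 1)%N then -2
  else 0.

Definition num_poly : fps := fun a b =>
  if (a == 0)%N && (b == 0)%N then 1
  else if (a == 0)%N && (b == 1)%N then -1
  else 0.

(* Main.v *)
Require Import Defs.
From mathcomp Require Import all_boot all_order all_algebra all_fingroup zify.
Set Implicit Arguments. Unset Strict Implicit. Unset Printing Implicit Defensive.

Definition blk k := mkseq (fun i => k.-1 - i) k.
Definition cb k (s : seq nat) := blk k ++ map (addn k) s.

Definition Valid n (s : seq nat) : Prop :=
  size s = n /\ (forall i, i < n -> nth 0 s i < n) /\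
  (forall i, i < n -> nth 0 s (nth 0 s i) = i) /\
  (forall i j k, i < j -> j < k -> k < n ->
     ~~ ((nth 0 s k < nth 0 s i) && (nth 0 s i < nth 0 s j))).

Lemma size_cb k s : size (cb k s) = k + size s.
Proof. by rewrite /cb size_cat size_mkseq size_map. Qed.

Lemma nth_cb k s i : i < k + size s ->
  nth 0 (cb k s) i = if i < k then k.-1 - i else k + nth 0 s (i - k).
Proof.
move=> h; rewrite /cb nth_cat size_mkseq; case: ifP => hi.
  by rewrite nth_mkseq.
by rewrite (nth_map 0) //; lia.
Qed.

Lemma Valid_cb n k s : 0 < k <= n -> Valid (n - k) s -> Valid n (cb k s).
Proof.
move=> hk [sz [bd [iv av]]].
have hf : forall i, i < n -> nth 0 (cb k s) i = if i < k then k.-1 - i else k + nth 0 s (i - k).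
  by move=> i hi; apply: nth_cb; lia.
split; first by rewrite size_cb sz; lia.
split.
  move=> i hi; rewrite hf //; case: ifP => h; first lia.
  have := bd (i - k); lia.
split.
  move=> i hi; rewrite (hf i hi); case: ifP => h.
    rewrite hf; last lia. rewrite ifT; last lia. lia.
  have b := bd (i - k) ltac:(lia).
  rewrite hf; last lia. rewrite ifF; last lia.
  have -> : k + nth 0 s (i - k) - k = nth 0 s (i - k) by lia.
  rewrite iv; lia.
move=> i j l hij hjl hl; rewrite !hf; try lia.
case: (ltnP i k) => hi.
  case: (ltnP j k) => hj; first by apply/negP => /andP [_]; lia.
  have -> : (l < k) = false by lia.
  by apply/negP => /andP [] ; lia.
rewrite !ifF; try lia.
have := av (i - k) (j - k) (l - k) ltac:(lia) ltac:(lia) ltac:(lia).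
by apply: contra => /andP [h1 h2]; apply/andP; split; lia.
Qed.

Lemma Valid_dec n s : 0 < n -> Valid n s ->
  exists k s', [/\ 0 < k <= n, Valid (n - k) s' & s = cb k s'].
Proof.
move=> hn [sz [bd [iv av]]].
set f := nth 0 s in bd iv av.
set m := f 0.
have hm : m < n by apply: bd.
have fm : f m = 0 by rewrite /m iv.
have finj : forall i j, i < n -> j < n -> f i = f j -> i = j.
  by move=> i j hi hj e; rewrite -(iv i hi) -(iv j hj) e.
have A : forall j, 0 < j < m -> 0 < f j < m.
  move=> j hj.
  have n0 : f j != 0 by apply/eqP => e; have := finj j m ltac:(lia) hm; rewrite e fm; lia.
  have nm : f j != m.
    by apply/eqP => e; have := iv j ltac:(lia); rewrite e fm; lia.
  have em : f 0 = m by [].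
  move/negP: (av 0 j m ltac:(lia) ltac:(lia) hm) => H.
  apply/andP; split; first lia.
  case: (ltnP (f j) m) => // h; exfalso; apply: H; apply/andP; split; lia.
have B : forall j j', 0 < j -> j < j' -> j' < m -> f j' < f j.
  move=> j j' h1 h2 h3.
  have := av j j' m h2 h3 hm; rewrite fm.
  have := A j ltac:(lia); have := A j' ltac:(lia).
  move=> h5 h6 /negP H.
  case: (ltngtP (f j') (f j)) => // h.
    by exfalso; apply: H; apply/andP; split; lia.
  by have := finj j' j ltac:(lia) ltac:(lia) h; lia.
have U : forall j, 0 < j < m -> f j <= m - j.
  elim=> [|j IH] hj; first lia.
  case: j IH hj => [|j] IH hj; first by have := A 1 hj; lia.
  have := IH ltac:(lia); have := B j.+1 j.+2 ltac:(lia) ltac:(lia) ltac:(lia); lia.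
have Lo : forall d, d < m.-1 -> d < f (m.-1 - d).
  elim=> [|d IH] hd; first by rewrite subn0; have := A m.-1 ltac:(lia); lia.
  have := IH ltac:(lia); have := B (m.-1 - d.+1) (m.-1 - d) ltac:(lia) ltac:(lia) ltac:(lia); lia.
have C : forall j, j <= m -> f j = m - j.
  move=> j hj.
  case: (posnP j) => [->|j0]; first by rewrite subn0.
  case: (ltnP j m) => hjm; last by (have -> : j = m by lia); rewrite fm subnn.
  have := U j ltac:(lia); have := Lo (m.-1 - j) ltac:(lia).
  have -> : m.-1 - (m.-1 - j) = j by lia.
  lia.
have D : forall j, m < j < n -> m < f j.
  move=> j hj; case: (ltnP m (f j)) => // h.
  have := iv j ltac:(lia); rewrite C //; lia.
pose k := m.+1.
pose s' := map (subn^~ k) (drop k s).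
have sz' : size s' = n - k by rewrite size_map size_drop sz.
have g' : forall i, i < n - k -> nth 0 s' i = f (k + i) - k.
  by move=> i hi; rewrite (nth_map 0) ?nth_drop // size_drop sz.
exists k, s'; split; first lia.
- split; first done.
  split.
    move=> i hi; rewrite g' //; have := bd (k + i) ltac:(lia); lia.
  split.
    move=> i hi; rewrite (g' i hi); have d1 := D (k + i) ltac:(lia).
    have b1 := bd (k + i) ltac:(lia).
    rewrite g'; last lia.
    have -> : k + (f (k + i) - k) = f (k + i) by lia.
    rewrite iv; lia.
  move=> i j l hij hjl hl; rewrite (g' i) ?(g' j) ?(g' l); try lia.
  have := av (k + i) (k + j) (k + l) ltac:(lia) ltac:(lia) ltac:(lia).
  have := D (k + i) ltac:(lia); have := D (k + j) ltac:(lia); have := D (k + l) ltac:(lia).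
  move=> h1 h2 h3; apply: contra => /andP [e1 e2]; apply/andP; split; lia.
- apply: (@eq_from_nth _ 0); first by rewrite size_cb sz' sz; lia.
  move=> i; rewrite sz => hi.
  rewrite nth_cb; last by rewrite sz'; lia.
  case: ifP => h; first by rewrite -/f C; lia.
  rewrite g'; last lia.
  have -> : k + (i - k) = i by lia.
  have := D i ltac:(lia); rewrite -/f; lia.
Qed.


Definition fc (s : seq nat) := count (fun i => nth 0 s i == i) (iota 0 (size s)).

Lemma blk_count k : count (fun i => k.-1 - i == i) (iota 0 k) = odd k.
Proof.
have E := odd_double_half k.
rewrite (@eq_in_count _ _ (fun i => odd k && (i == k./2))); last first.
  move=> i; rewrite mem_iota => /andP [_ hi] /=.
  case: (odd k) E => /= E; first by apply/eqP/eqP; lia.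
  by apply/negbTE/eqP; lia.
case: (odd k) E => /= E; last by rewrite count_pred0.
have -> : count (fun i => i == k./2) (iota 0 k) = count_mem (k./2) (iota 0 k) by [].
rewrite count_uniq_mem ?iota_uniq // mem_iota; lia.
Qed.

Lemma fc_cb k s : fc (cb k s) = odd k + fc s.
Proof.
rewrite /fc size_cb iotaD count_cat; congr (_ + _).
  rewrite -blk_count; apply: eq_in_count => i; rewrite mem_iota => /andP [_ hi].
  by rewrite nth_cb ?hi //; lia.
have -> : iota (0 + k) (size s) = map (addn k) (iota 0 (size s)) by rewrite -iotaDl addn0.
rewrite count_map; apply: eq_in_count => i; rewrite mem_iota => /andP [_ hi] /=.
rewrite nth_cb; last lia.
rewrite ifF; last lia.
have -> : k + i - k = i by lia.
by rewrite eqn_add2l.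
Qed.

Lemma fc_le s : fc s <= size s.
Proof. by rewrite /fc -[X in _ <= X](size_iota 0) count_size. Qed.

Lemma cardcount (T : finType) (P : pred T) : #|[set x | P x]| = count P (enum T).
Proof. by rewrite cardsE cardE /enum_mem size_filter count_filter; apply: eq_count => x; rewrite /= andbT. Qed.
Lemma partP (T : finType) (p : {perm T}) : partition (porbits p) [set: T].
Proof.
have := @orbit_partition _ _ _ (perm_action T) <[p]>%G [set: T].
rewrite /porbits.
have -> : porbit p @: T = orbit (perm_action T) <[p]> @: [set: T].
  by apply/setP=> C; apply/imsetP/imsetP => [] [x _ ->]; exists x; rewrite ?porbitE.
apply. by apply/actsP => a _ x; rewrite !inE.
Qed.

Section P.
Variable n : nat.
Definition L (p : 'S_n) : seq nat := map (fun i => val (p i)) (enum 'I_n).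

Lemma size_L p : size (L p) = n.
Proof. by rewrite size_map size_enum_ord. Qed.

Lemma nth_L p i (h : i < n) : nth 0 (L p) i = p (Ordinal h).
Proof.
rewrite (nth_map (Ordinal h)) ?size_enum_ord //.
by have := nth_ord_enum (Ordinal h) (Ordinal h) => /= ->.
Qed.

Lemma L_inj : injective L.
Proof.
move=> p q e; apply/permP => x; apply: ord_inj.
have ex : Ordinal (ltn_ord x) = x by apply: val_inj.
by have := nth_L p (ltn_ord x); rewrite e nth_L ex => ->.
Qed.

Lemma porbit_inv (T : finType) (p : {perm T}) : (forall x, p (p x) = x) -> forall x, porbit p x = [set x; p x].
Proof.
move=> iv x; apply/setP => y; rewrite !inE.
have It : forall i, iter i p x = if odd i then p x else x.
  elim=> [|i IH] //=; rewrite IH; case: (odd i) => //=.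
apply/porbitP/orP.
  by case=> i ->; rewrite permX It; case: (odd i); [right|left].
by case=> /eqP ->; [exists 0; rewrite permX | exists 1; rewrite permX].
Qed.

Lemma inv_of_I (p : 'S_n) : cycles_le2 p -> forall x, p (p x) = x.
Proof.
move=> /forallP H x.
have := H (porbit p x); rewrite imset_f //=.
move=> /orP [] /eqP h; have := iter_porbit p x; rewrite h /=.
  by move=> e; rewrite e e.
by [].
Qed.

Lemma I_of_inv (p : 'S_n) : (forall x, p (p x) = x) -> cycles_le2 p.
Proof.
move=> iv; apply/forallP => C; apply/implyP => /imsetP [x _ ->].
rewrite porbit_inv // cards2; by case: (x != p x).
Qed.

Lemma nth_L' (p : 'S_n) (x : 'I_n) : nth 0 (L p) x = p x.
Proof. by rewrite nth_L; congr (nat_of_ord (p _)); apply: val_inj. Qed.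

Lemma Valid_L (p : 'S_n) : in_I p -> Valid n (L p).
Proof.
move=> /andP [av cy]; have iv := inv_of_I cy.
split; first exact: size_L.
split; first by move=> i hi; rewrite nth_L.
split; first by move=> i hi; rewrite (nth_L p hi) nth_L' iv.
move=> i j k hij hjk hk; rewrite (nth_L p (ltn_trans hij (ltn_trans hjk hk))) (nth_L p (ltn_trans hjk hk)) (nth_L p hk).
have := forallP (forallP (forallP av (Ordinal (ltn_trans hij (ltn_trans hjk hk)))) (Ordinal (ltn_trans hjk hk))) (Ordinal hk).
by rewrite /= hij hjk.
Qed.

Lemma L_Valid s : Valid n s -> exists2 p : 'S_n, in_I p & L p = s.
Proof.
move=> [sz [bd [iv av]]].
pose f (x : 'I_n) : 'I_n := Ordinal (bd x (ltn_ord x)).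
have finj : injective f.
  move=> x y /(congr1 val) /= e; apply: val_inj => /=.
  by rewrite -(iv x (ltn_ord x)) -(iv y (ltn_ord y)) e.
exists (perm finj).
  apply/andP; split.
    apply/forallP => i; apply/forallP => j; apply/forallP => k; rewrite !permE /=.
    apply/negP => /and4P [h1 h2 h3 h4].
    by move/negP: (av i j k h1 h2 (ltn_ord k)); apply; rewrite h3 h4.
  apply: I_of_inv => x; rewrite !permE; apply: val_inj => /=.
  exact: iv.
apply: (@eq_from_nth _ 0); first by rewrite size_L sz.
by move=> i; rewrite size_L => hi; rewrite nth_L permE.
Qed.

Lemma fc_L (p : 'S_n) : fc (L p) = #|[set x | p x == x]|.
Proof.
rewrite /fc size_L -val_enum_ord count_map cardcount.
by apply: eq_count => x /=; rewrite nth_L'.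
Qed.

Lemma ncyc1 (p : 'S_n) : in_I p -> ncycles p 1 = fc (L p).
Proof.
move=> /andP [_ cy]; have iv := inv_of_I cy.
rewrite fc_L /ncycles.
have -> : [set C in porbits p | #|C| == 1] = porbit p @: [set x | p x == x].
  apply/setP => C; rewrite inE; apply/andP/imsetP.
    case=> /imsetP [x _ ->] h; exists x => //; move: h.
    by rewrite porbit_inv // cards2 inE eqSS eqb0 negbK eq_sym.
  case=> x; rewrite inE => /eqP px ->; split; first by apply: imset_f.
  by rewrite porbit_inv // px cards2 eqxx.
rewrite card_in_imset // => x y; rewrite !inE => /eqP px /eqP py e.
have := porbit_id p x; rewrite e porbit_inv // py !inE => /orP [] /eqP //.
Qed.

Lemma ncyc_sum (p : 'S_n) : in_I p -> n = ncycles p 1 + 2 * ncycles p 2.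
Proof.
move=> /andP [_ cy].
have E := card_partition (partP p); rewrite cardsT card_ord in E; rewrite {1}E.
rewrite (bigID (fun C : {set 'I_n} => #|C| == 1)) /=; congr (_ + _).
  rewrite (eq_bigr (fun _ => 1)); last by move=> C /andP [_ /eqP].
  rewrite (eq_bigl (fun C => C \in [set C in porbits p | #|C| == 1])); last by move=> C; rewrite inE.
  by rewrite sum_nat_const muln1.
rewrite (eq_bigl (fun C => C \in [set C in porbits p | #|C| == 2])); last first.
  move=> C; rewrite inE; case h: (C \in porbits p) => //=.
  by have := forallP cy C; rewrite h /=; case/orP => /eqP ->.
rewrite (eq_bigr (fun _ => 2)); last by move=> C; rewrite inE => /andP [_ /eqP].
by rewrite sum_nat_const mulnC.
Qed.
End P.


Definition V n : seq (seq nat) := map (@L n) [seq p <- enum {perm 'I_n} | in_I p].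
Definition Q n a := #|[set p : 'S_n | in_I p && (fc (L p) == a)]|.

Lemma Q_count n a : Q n a = count (fun s => fc s == a) (V n).
Proof.
rewrite /Q cardcount /V count_map [RHS]count_filter; apply: eq_count => p /=.
by rewrite andbC.
Qed.

Lemma memV n s : (s \in V n) <-> Valid n s.
Proof.
split.
  by case/mapP => p; rewrite mem_filter => /andP [h _] ->; apply: Valid_L.
case/L_Valid => p h <-; apply: map_f; by rewrite mem_filter h mem_enum.
Qed.

Lemma uniqV n : uniq (V n).
Proof. rewrite map_inj_uniq; [by rewrite filter_uniq ?enum_uniq | move=> p q; exact: L_inj]. Qed.

Lemma cb_inj k : injective (cb k).
Proof.
move=> s1 s2 e.
have d : forall s, drop k (cb k s) = map (addn k) s.
  by move=> s; rewrite /cb drop_size_cat // size_mkseq.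
by have := d s1; rewrite e d => /inj_map h; apply/esym/h/addnI.
Qed.

Lemma cb_head k s : 0 < k -> nth 0 (cb k s) 0 = k.-1.
Proof. move=> h; rewrite nth_cb; [case: ifP => h1; lia | lia]. Qed.

Lemma uniq_flat (ks : seq nat) (t : nat -> seq (seq nat)) :
  uniq ks -> all (fun k => 0 < k) ks -> (forall k, uniq (t k)) ->
  uniq [seq cb k s | k <- ks, s <- t k].
Proof.
move=> + + ut; elim: ks => [|k ks IH] //= /andP [kn u] /andP [kp a].
rewrite cat_uniq IH // andbT map_inj_uniq ?ut //; last exact: cb_inj.
apply/hasP => [] [x /flatten_mapP [k' hk' /mapP [s' _ ->]] /mapP [s _ e]].
have := cb_head s' (allP a k' hk'); rewrite e cb_head // => e'.
have ek : k = k' by move: (allP a k' hk'); lia.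
by move: kn; rewrite ek hk'.
Qed.

Definition W n := [seq cb k s | k <- iota 1 n, s <- V (n - k)].

Lemma uniqW n : uniq (W n).
Proof.
apply: uniq_flat; first exact: iota_uniq.
  by apply/allP => k; rewrite mem_iota; lia.
move=> k; exact: uniqV.
Qed.

Lemma memW n s : 0 < n -> (s \in W n) <-> Valid n s.
Proof.
move=> hn; split.
  case/flatten_mapP => k; rewrite mem_iota => hk /mapP [s' /memV hs' ->].
  apply: Valid_cb => //; lia.
case/(Valid_dec hn) => k [s' [hk hs' ->]].
apply/flatten_mapP; exists k; first by rewrite mem_iota; lia.
by apply: map_f; apply/memV.
Qed.

Lemma Q_rec n a : 0 < n ->
  Q n a = \sum_(k < n) count (fun s => odd k.+1 + fc s == a) (V (n - k.+1)).
Proof.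
move=> hn; rewrite Q_count.
have pe : perm_eq (V n) (W n).
  apply: uniq_perm; [exact: uniqV | exact: uniqW |].
  move=> s; apply/idP/idP => h.
    exact: (proj2 (memW s hn) (proj1 (memV n s) h)).
  exact: (proj2 (memV n s) (proj1 (memW s hn) h)).
rewrite (seq.permP pe) /W count_flatten -map_comp sumnE big_map.
have -> : iota 1 n = map S (iota 0 n) by rewrite -(iotaDl 1 0).
rewrite big_map -val_enum_ord big_map big_enum /=.
apply: eq_bigr => k _ /=; rewrite count_map.
by apply: eq_count => s /=; rewrite fc_cb.
Qed.


Lemma R0 m a : count (fun s => false + fc s == a) (V m) = Q m a.
Proof. by rewrite Q_count. Qed.

Definition Q1 m a := if a is a'.+1 then Q m a' else 0.

Lemma R1 m a : count (fun s => true + fc s == a) (V m) = Q1 m a.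
Proof.
rewrite /Q1; case: a => [|a].
  by rewrite (eq_count (a2 := pred0)) ?count_pred0.
by rewrite Q_count; apply: eq_count => s; rewrite /= add1n eqSS.
Qed.

Lemma Q_rec2 n a : 0 < n ->
  Q n a = Q1 n.-1 a + (if 1 < n then Q (n - 2) a else 0) + (if 2 < n then Q (n - 2) a else 0).
Proof.
move=> hn; case: n hn => [|m] hn; first by []. rewrite Q_rec // big_ord_recl /= subSS subn0 R1.
clear hn; case: m => [|m]; first by rewrite big_ord0 !addn0.
rewrite big_ord_recl /= subSS subSS subn0 R0 /= -addnA; congr (_ + (_ + _)).
case: m => [|m]; first by rewrite big_ord0.
rewrite /= (Q_rec _ (ltn0Sn m)).
apply: eq_bigr => k _; rewrite /bump !leq0n !add1n !add0n !negbK !subSS /=.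
by [].
Qed.

Lemma Q0 a : Q 0 a = (a == 0).
Proof.
rewrite /Q.
have fc0 : forall p : 'S_0, fc (L p) = 0.
  by move=> p; have := fc_le (L p); rewrite size_L; lia.
have I0 : forall p : 'S_0, in_I p.
  move=> p; apply/andP; split.
    by apply/forallP => -[i hi]; exfalso; move: hi; rewrite ltn0.
  by apply: I_of_inv => -[i hi]; exfalso; move: hi; rewrite ltn0.
case: a => [|a].
  rewrite (eq_card (B := [set: 'S_0])); first by rewrite cardsT card_Sn.
  by move=> p; rewrite !inE I0 fc0.
rewrite (eq_card0 (A := [set p : 'S_0 | in_I p && (fc (L p) == a.+1)])) //.
by move=> p; rewrite !inE fc0 andbF.
Qed.

Lemma Q_big n a : n < a -> Q n a = 0.
Proof.
move=> h; rewrite /Q; apply: eq_card0 => p; rewrite !inE.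
have := fc_le (L p); rewrite size_L => h'.
apply/negbTE/negP => /andP [_ /eqP]; lia.
Qed.

Import GRing.Theory.

Lemma term n a b : #|[set p : 'S_n | in_I p && (ncycles p 1 == a) && (ncycles p 2 == b)]| = if n == a + 2 * b then Q n a else 0.
Proof.
rewrite /Q; case: eqP => [e|ne].
  apply: eq_card => p; rewrite !inE; case h: (in_I p) => //=.
  have := ncyc_sum h; rewrite ncyc1 // => e'.
  apply/andP/eqP => [[/eqP -> _] //| e1]; split; apply/eqP; lia.
apply: eq_card0 => p; rewrite !inE; apply/negbTE/negP => /andP [/andP [h /eqP e1] /eqP e2].
have := ncyc_sum h; lia.
Qed.

Lemma igf a b : i_gf a b = Posz (Q (a + 2 * b) a).
Proof.
rewrite /i_gf; congr Posz.
rewrite (eq_bigr _ (fun (i : 'I_(a + 2 * b).+1) _ => term i a b)) big_ord_recr /= eqxx big1 ?add0n //.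
move=> i _; rewrite ifN //; apply/eqP => e; have := ltn_ord i; rewrite /= e; lia.
Qed.

Local Open Scope ring_scope.
Lemma fpsE (F : fps) a b : fps_mul den_poly F a b =
  (F a b - (if a is a'.+1 then F a' b else 0) - 2 * (if b is b'.+1 then F a b' else 0))%R.
Proof.
rewrite /fps_mul big_ord_recl big_ord_recl.
have d2 : forall i j, den_poly i.+2 j = 0 by move=> i j; rewrite /den_poly /=.
have d02 : forall j, den_poly 0 j.+2 = 0 by move=> j; rewrite /den_poly /=.
have d11 : forall j, den_poly 1 j.+1 = 0 by move=> j; rewrite /den_poly /=.
rewrite /= !subn0 [den_poly 0 0]/den_poly /= mul1r.
have -> : \sum_(i < b) den_poly 0 (lift ord0 i) * F a (b - lift ord0 i)%N = - (2 * (if b is b'.+1 then F a b' else 0)).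
  case: b => [|b]; first by rewrite big_ord0 mulr0 oppr0.
  rewrite big_ord_recl big1; last by move=> i _; rewrite /= d02 mul0r.
  by rewrite /= subSS subn0 [den_poly 0 1]/den_poly /= addr0 mulNr.
have -> : \sum_(i < a) \sum_(j < b.+1) den_poly (lift ord0 i) j * F (a - lift ord0 i)%N (b - j)%N = - (if a is a'.+1 then F a' b else 0).
  case: a => [|a]; first by rewrite big_ord0 oppr0.
  rewrite big_ord_recl [X in _ + X]big1 ?addr0; last first.
    by move=> i _; rewrite big1 // => j _; rewrite /= d2 mul0r.
  rewrite big_ord_recl big1; last by move=> j _; rewrite /= d11 mul0r.
  by rewrite /= subSS !subn0 [den_poly 1 0]/den_poly /= !addr0 mulN1r.
by rewrite addrAC.
Qed.
Close Scope ring_scope.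

Theorem lemma3p8 : forall a b : nat, fps_mul den_poly i_gf a b = num_poly a b.
Proof.
move=> a b; rewrite fpsE.
case: b => [|b].
  case: a => [|a].
    by rewrite igf Q0.
  rewrite !igf !muln0 !addn0 (@Q_rec2 a.+1 a.+1 (ltn0Sn a)) /= /Q1 (Q_big (n := a.+1 - 2)) ?if_same //; last lia.
  rewrite /num_poly /=; lia.
have e2 : a + 2 * b.+1 - 2 = a + 2 * b by lia.
rewrite !igf (@Q_rec2 (a + 2 * b.+1) a); last lia.
rewrite e2 (ifT _ _ (_ : 1 < a + 2 * b.+1)); last lia.
case: a e2 => [|a] e2; rewrite /Q1 /num_poly /= ?igf.
  case: b e2 => [|b] e2 /=.
    rewrite (_ : 0 + 2 * 0 = 0) // Q0 /=; lia.
  rewrite ifT; last lia.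
  lia.
rewrite ifT; last lia.
lia.
Qed.
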